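(* Let $u\in V$ be quasiprimary of weight $N\ge1$, let $f_0(x),\dots,f_{2N-2}(x)$ be arbitrary Laurent series, and put $\psi^{(0)}_N(x,y)=\frac1{x-y}+\sum_{\ell=0}^{2N-2}f_\ell(x)y^\ell$. Then for all $v_1,\dots,v_n\in V$, \[ Z^{(0)}(u,x;v_1,y_1;\dots;v_n,y_n)=\sum_{k=1}^n\sum_{j\ge0}\partial^{(0,j)}\psi^{(0)}_N(x,y_k)\,Z^{(0)}(v_1,y_1;\dots;u(j)v_k,y_k;\dots;v_n,y_n). \]
   Context: $V=\bigoplus_{n\ge0}V_n$ is a simple, self-dual vertex operator algebra (VOA) of strong CFT type ($V_0=\mathbb C\mathbb 1$, $L(1)V_1=0$), with vertex operators $Y(u,z)=\sum_{n\in\mathbb Z}u(n)z^{-n-1}$, Virasoro modes $L(n)$, and $\mathrm{wt}(v)=n$ for $v\in V_n$. A vector $u$ is quasiprimary if $L(1)u=0$. $\langle\cdot,\cdot\rangle$ is the unique invariant nondegenerate bilinear form on $V$ (Li–Zamolodchikov metric) with $\langle\mathbb 1,\mathbb 1\rangle=1$, invariant meaning $\langle Y(u,z)v,w\rangle=\langle v,Y(e^{zL(1)}(-z^{-2})^{L(0)}u,1/z)w\rangle$. The genus zero $n$-point function is $Z^{(0)}(v_1,y_1;\dots;v_n,y_n)=\langle \mathbb 1,Y(v_1,y_1)\cdots Y(v_n,y_n)\mathbb 1\rangle$. Notation: $\partial^{(j)}_y=\frac1{j!}\partial_y^j$ and $\partial^{(i,j)}F(x,y)=\partial_x^{(i)}\partial_y^{(j)}F(x,y)$;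 negative powers of binomials such as $\frac1{x-y}$ are expanded using $(x+y)^m=\sum_{k\ge0}\binom mk x^{m-k}y^k$. *)

(* Defs.v *)
(* Abstract vertex operator algebras over a numeric closed
   field K (the abstract stand-in for C), formalised via modes u(n). *)
From HB Require Import structures.
From mathcomp Require Import all_boot all_order all_algebra.
Set Implicit Arguments. Unset Strict Implicit. Unset Printing Implicit Defensive.
Import Order.TTheory GRing.Theory Num.Theory.
Local Open Scope ring_scope.

Definition binz {K : fieldType} (r : int) (i : nat) : K :=
  (\prod_(j < i) (r%:~R - j%:R)) / (i`!)%:R.

(* A vertex operator algebra, in mode form: Y u n v = u(n) v,
   i.e. Y(u,z) v = \sum_n u(n) v z^{-n-1}.  L(n) = omega(n+1).
   The grading is V = (+)_{n >= 0} V_n with V_n the L(0)-eigenspace of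
   eigenvalue n (strong CFT type: only n >= 0 occurs, V_0 = K 1, L(1)V_1 = 0). *)
Record VOA (K : numClosedFieldType) (V : lmodType K) := {
  Y : V -> int -> V -> V;
  vac : V;
  omega : V;
  cc : K;
  Y_linl : forall (a : K) u u' n w, Y (a *: u + u') n w = a *: Y u n w + Y u' n w;
  Y_linr : forall u n (a : K) w w', Y u n (a *: w + w') = a *: Y u n w + Y u n w';
  Y_trunc : forall u v, exists T : int, forall n : int, T <= n -> Y u n v = 0;
  Y_vac : forall n v, Y vac n v = (if n == -1 then v else 0);
  Y_create : forall u (n : int), 0 <= n -> Y u n vac = 0;
  Y_create1 : forall u, Y u (-1) vac = u;
  (* Borcherds (Jacobi) identity in modes; M is any bound beyond which all
     the (finitely many nonzero) summands vanish *)
  Borcherds : forall u v w (p q r : int) (M : nat),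
     (forall i : nat, (M <= i)%N ->
        [/\ Y u (r + i%:Z) v = 0, Y v (q + i%:Z) w = 0 & Y u (p + i%:Z) w = 0]) ->
     \sum_(i < M) binz p i *: Y (Y u (r + i%:Z) v) (p + q - i%:Z) w =
     \sum_(i < M) ((-1) ^+ i * binz r i) *:
        (Y u (p + r - i%:Z) (Y v (q + i%:Z) w)
         - ((-1) ^ r) *: Y v (q + r - i%:Z) (Y u (p + i%:Z) w));
  Virasoro : forall (m n : int) v,
     Y omega (m + 1) (Y omega (n + 1) v) - Y omega (n + 1) (Y omega (m + 1) v) =
     (m - n)%:~R *: Y omega (m + n + 1) v
     + ((if m + n == 0 then (m ^+ 3 - m)%:~R / 12%:R else 0) * cc) *: v;
  (* Y(L(-1)u, z) = d/dz Y(u, z) *)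
  L_deriv : forall u (n : int) v, Y (Y omega 0 u) n v = - (n%:~R) *: Y u (n - 1) v;
  omega_wt : Y omega 1 omega = 2%:R *: omega;
  grading : forall v, exists s : seq (nat * V),
     v = \sum_(p <- s) p.2 /\ (forall p, p \in s -> Y omega 1 p.2 = (p.1)%:R *: p.2);
  fin_dim : forall n : nat, exists s : seq V, forall v, Y omega 1 v = n%:R *: v ->
     exists c : 'I_(size s) -> K, v = \sum_(i < size s) c i *: s`_i;
  V0_vac : forall v, Y omega 1 v = 0 -> exists a : K, v = a *: vac;
  L1_V1 : forall v, Y omega 1 v = v -> Y omega 2 v = 0
}.

Section VOADefs.
Variables (K : numClosedFieldType) (V : lmodType K) (W : VOA V).

Definition L (n : int) : V -> V := Y W (omega W) (n + 1).

Definition is_wt (v : V) (k : nat) : Prop := L 0 v = k%:R *: v.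

Definition quasiprimary (u : V) : Prop := L 1 u = 0.

Definition is_ideal (I : V -> Prop) : Prop :=
  [/\ I 0, (forall (a : K) x y, I x -> I y -> I (a *: x + y))
   & (forall u n w, I w -> I (Y W u n w) /\ I (Y W w n u))].

Definition simpleVOA : Prop :=
  forall I, is_ideal I -> (forall v, I v -> v = 0) \/ (forall v, I v).

(* Invariance <Y(u,z)v,w> = <v, Y(e^{zL(1)}(-z^{-2})^{L(0)}u, 1/z) w>, read off
   coefficientwise for homogeneous u of weight k:
   <u(n)v, w> = (-1)^k \sum_{m>=0} 1/m! <v, (L(1)^m u)(2k-m-n-2) w>. *)
Definition LZ_form (B : V -> V -> K) : Prop :=
  [/\ (forall (a : K) x x' y, B (a *: x + x') y = a * B x y + B x' y),
      (forall (a : K) x y y', B x (a *: y + y') = a * B x y + B x y'),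
      (forall x, (forall y, B x y = 0) -> x = 0) /\
      (forall y, (forall x, B x y = 0) -> y = 0),
      B (vac W) (vac W) = 1
    & (forall u k, is_wt u k -> forall (n : int) v w,
        B (Y W u n v) w =
        (-1) ^+ k * \sum_(m < k.+1)
           (m`!)%:R^-1 * B v (Y W (iter m (L 1) u) ((2 * k)%:Z - m%:Z - n - 2) w))].

(* Coefficient of y_1^{a_1} ... y_r^{a_r} in the genus zero correlation function
   <1, Y(v_1,y_1) ... Y(v_r,y_r) 1>, for s = [:: (v_1,a_1); ...; (v_r,a_r)]:
   equals <1, v_1(-a_1-1) ... v_r(-a_r-1) 1>. *)
Definition corr (B : V -> V -> K) (s : seq (V * int)) : K :=
  B (vac W) (foldr (fun p acc => Y W p.1 (- p.2 - 1) acc) (vac W) s).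

End VOADefs.

(* Coefficient of x^a y^c in psi_N^{(0)}(x,y) = 1/(x-y) + \sum_{l=0}^{2N-2} f_l(x) y^l,
   with 1/(x-y) = \sum_{m>=0} x^{-m-1} y^m and f l a = coefficient of x^a in f_l. *)
Definition psi_coef {K : fieldType} (N : nat) (f : nat -> int -> K) (a c : int) : K :=
  (if (0 <= c) && (a == - c - 1) then 1 else 0)
  + (if (0 <= c) && (c <= (2 * N)%:Z - 2) then f (absz c) a else 0).

(* Coefficient of x^a y^c in d^{(0,j)} psi_N^{(0)}(x,y);
   d^{(j)}_y y^m = binom(m,j) y^{m-j}. *)
Definition dpsi_coef {K : fieldType} (N : nat) (f : nat -> int -> K) (j : nat) (a c : int) : K :=
  binz (c + j%:Z) j * psi_coef N f a (c + j%:Z).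

(* Main.v *)
Require Import Defs.
From HB Require Import structures.
From mathcomp Require Import all_boot all_order all_algebra.
From mathcomp Require Import zify ring lra.
Import Order.TTheory GRing.Theory Num.Theory.
Local Open Scope ring_scope.

Lemma binz0 {K : fieldType} (r : int) : binz r 0 = 1 :> K.
Proof. by rewrite /binz big_ord0 fact0 divr1. Qed.

Lemma binz_gt {K : fieldType} (m j : nat) : (m < j)%N -> binz m%:Z j = 0 :> K.
Proof.
move=> H; rewrite /binz (bigD1 (Ordinal H)) //=.
have -> : ((m%:Z)%:~R : K) - m%:R = 0 by apply: subrr.
by rewrite !mul0r.
Qed.

Lemma reindex (K : fieldType) (A L j : nat) (HL : (L <= A)%N) (H : nat -> nat -> K) :
  \sum_(c < A) (if (c + j < L)%N then H (c + j)%N c else 0)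
  = \sum_(l < L) (if (j <= l)%N then H l (l - j)%N else 0).
Proof.
case: (leqP j L) => HjL.
  rewrite -(big_mkord (fun _ => true) (fun c => if (c + j < L)%N then H (c + j)%N c else 0)).
  rewrite -(big_mkord (fun _ => true) (fun l => if (j <= l)%N then H l (l - j)%N else 0)).
  rewrite (@big_cat_nat _ _ _ (L - j)%N 0 A) /=; [|lia|lia].
  rewrite [X in _ + X]big_nat_cond [X in _ + X]big1 ?addr0; last first.
    move=> c /andP[/andP[H1 _] _].
    have -> : (c + j < L)%N = false by apply/negbTE; rewrite -leqNgt; lia.
    by [].
  rewrite (big_cat_nat (leq0n j) HjL) /=.
  rewrite [X in _ = X + _]big_nat_cond [X in _ = X + _]big1 ?add0r; last first.
    move=> c /andP[/andP[_ H1] _].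
    have -> : (j <= c)%N = false by apply/negbTE; rewrite -ltnNge; lia.
    by [].
  rewrite [RHS](@big_addn _ _ _ 0 L j).
  rewrite big_nat_cond [in RHS]big_nat_cond.
  apply: eq_bigr => c /andP[/andP[_ H1] _].
  have -> : (c + j < L)%N = true by lia.
  by rewrite leq_addl addnK.
rewrite big1; last first.
  move=> c _; have -> : (c + j < L)%N = false by apply/negbTE; rewrite -leqNgt; lia.
  by [].
rewrite big1 // => l _.
have -> : (j <= l)%N = false by apply/negbTE; rewrite -ltnNge; have := ltn_ord l; lia.
by [].
Qed.

Section Basics.
Variables (K : numClosedFieldType) (V : lmodType K) (W : VOA V).

Lemma Y0l n w : Y W 0 n w = 0.
Proof.
have := Y_linl W 1 0 0 n w; rewrite !scale1r addr0 => H.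
by apply: (@addrI _ (Y W 0 n w)); rewrite addr0 -H.
Qed.

Lemma Y0r u n : Y W u n 0 = 0.
Proof.
have := Y_linr W u n 1 0 0; rewrite !scale1r addr0 => H.
by apply: (@addrI _ (Y W u n 0)); rewrite addr0 -H.
Qed.

Lemma YZr u n a w : Y W u n (a *: w) = a *: Y W u n w.
Proof. by have := Y_linr W u n a w 0; rewrite addr0 Y0r addr0. Qed.

Lemma YDr u n w w' : Y W u n (w + w') = Y W u n w + Y W u n w'.
Proof. by have := Y_linr W u n 1 w w'; rewrite !scale1r. Qed.

Lemma Y_sumr u n (I : Type) (r : seq I) (P : pred I) (F : I -> V) :
  Y W u n (\sum_(i <- r | P i) F i) = \sum_(i <- r | P i) Y W u n (F i).
Proof. exact: (big_morph (Y W u n) (YDr u n) (Y0r u n)). Qed.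

Lemma comm (u v w : V) (m n : int) (J : nat)
  (HJ : forall i : nat, (J <= i)%N -> Y W u i%:Z v = 0) :
  Y W u m (Y W v n w) = Y W v n (Y W u m w)
    + \sum_(i < J) binz m i *: Y W (Y W u i%:Z v) (m + n - i%:Z) w.
Proof.
have [T1 H1] := Y_trunc W u v.
have [T2 H2] := Y_trunc W v w.
have [T3 H3] := Y_trunc W u w.
pose M := (J + absz T1 + absz (T2 - n) + absz (T3 - m)).+1.
have Hb : forall i : nat, (M <= i)%N ->
  [/\ Y W u (0 + i%:Z) v = 0, Y W v (n + i%:Z) w = 0 & Y W u (m + i%:Z) w = 0].
  move=> i Hi; split; [apply: H1 | apply: H2 | apply: H3]; rewrite /M in Hi; lia.
have := @Borcherds _ _ W u v w m n 0 M Hb.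
rewrite [X in _ = X]big_ord_recl [X in _ = _ + X]big1 /=; last first.
  move=> i _; rewrite /bump /= binz_gt // mulr0 scale0r //.
rewrite addr0 expr0 mul1r binz0 scale1r expr0z scale1r.
have E1 : m + 0 - (0%N)%:Z = m by lia.
have E2 : n + 0 - (0%N)%:Z = n by lia.
have E3 : m + (0%N)%:Z = m by lia.
have E4 : n + (0%N)%:Z = n by lia.
rewrite E1 E2 E3 E4 => H.
rewrite [X in _ = _ + X](big_ord_widen M (fun i : nat => binz m i *: Y W (Y W u i%:Z v) (m + n - i%:Z) w)); last by rewrite /M; lia.
rewrite big_mkcond /=.
rewrite [X in _ = _ + X](eq_bigr (fun i : 'I_M => binz m i *: Y W (Y W u (0 + i%:Z) v) (m + n - i%:Z) w)); last first.
  move=> i _; case: ltnP => Hi; first by rewrite add0r.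
  by rewrite add0r HJ // Y0l scaler0.
by rewrite H addrC subrK.
Qed.

Definition Fs (s : seq (V * int)) : V :=
  foldr (fun p acc => Y W p.1 (- p.2 - 1) acc) (vac W) s.

Definition x00 : V * int := (0, 0).

Definition repl (u : V) (s : seq (V * int)) (k j : nat) (c : int) :=
  set_nth x00 s k (Y W u j%:Z (nth x00 s k).1, (nth x00 s k).2 - c).

Lemma comm_list (u : V) (J : nat) (m : int) (Hm : 0 <= m) : forall s,
  (forall k i, (J <= i)%N -> Y W u i%:Z (nth x00 s k).1 = 0) ->
  Y W u m (Fs s) = \sum_(k < size s) \sum_(j < J) binz m j *: Fs (repl u s k j (m - j%:Z)).
Proof.
elim=> [|p s IH] Hs.
  by rewrite big_ord0 /Fs /= Y_create.
rewrite /= big_ord_recl /=.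
rewrite {1}/Fs /= -/(Fs s).
rewrite (@comm u p.1 (Fs s) m _ J (Hs 0%N)) (IH (fun k => Hs k.+1)) Y_sumr addrC.
congr (_ + _).
  apply: eq_bigr => j _; rewrite /repl /= /Fs /=.
  congr (_ *: Y W _ _ _); lia.
apply: eq_bigr => k _; rewrite Y_sumr; apply: eq_bigr => j _.
by rewrite YZr.
Qed.

Lemma B0l (B : V -> V -> K) (HB : LZ_form W B) w : B 0 w = 0.
Proof.
case: HB => HBl _ _ _ _.
have := HBl 1 0 0 w; rewrite scale1r addr0 mul1r => H.
by apply: (@addrI _ (B 0 w)); rewrite addr0 -H.
Qed.

Lemma B0r (B : V -> V -> K) (HB : LZ_form W B) w : B w 0 = 0.
Proof.
case: HB => _ HBr _ _ _.
have := HBr 1 w 0 0; rewrite scale1r addr0 mul1r => H.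
by apply: (@addrI _ (B w 0)); rewrite addr0 -H.
Qed.

Lemma B_sumr (B : V -> V -> K) (HB : LZ_form W B) x (I : Type) (r : seq I) (P : pred I) (F : I -> V) :
  B x (\sum_(i <- r | P i) F i) = \sum_(i <- r | P i) B x (F i).
Proof.
case: (HB) => _ HBr _ _ _.
apply: (big_morph (B x)); last exact: B0r.
by move=> y y'; have := HBr 1 x y y'; rewrite !scale1r mul1r.
Qed.

Lemma BZr (B : V -> V -> K) (HB : LZ_form W B) x a y : B x (a *: y) = a * B x y.
Proof.
case: (HB) => _ HBr _ _ _.
by have := HBr a x y 0; rewrite addr0 B0r // addr0.
Qed.

Lemma Bvac (B : V -> V -> K) (HB : LZ_form W B) (u : V) (N : nat)
  (Hwt : is_wt W u N) (Hqp : quasiprimary W u) (l : int) w :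
  l <= (2 * N)%:Z - 2 -> B (vac W) (Y W u l w) = 0.
Proof.
move=> Hl.
case: (HB) => _ _ _ _ Hinv.
have := Hinv u N Hwt ((2 * N)%:Z - 2 - l) (vac W) w.
rewrite Y_create; last by lia.
rewrite B0l // big_ord_recl big1; last first.
  move=> i _; rewrite /bump /= add0n -iterS iterSr.
  have -> : L W 1 u = 0 by exact: Hqp.
  have iter0 : forall k, iter k (L W 1) 0 = 0.
    by elim=> //= k ->; rewrite /L Y0r.
  rewrite iter0.
  by rewrite Y0l B0r // mulr0.
rewrite addr0 /= fact0 invr1 mul1r.
have -> : (2 * N)%:Z - 0%N%:Z - ((2 * N)%:Z - 2 - l) - 2 = l by lia.
move/esym/eqP; rewrite mulf_eq0 signr_eq0 /= => /eqP //.
Qed.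

Lemma nth_s (n : nat) (v : 'I_n -> V) (b : 'I_n -> int) (k : 'I_n) :
  nth x00 [seq (v i, b i) | i <- enum 'I_n] k = (v k, b k).
Proof. by rewrite (nth_map k) ?size_enum_ord // nth_ord_enum. Qed.

Lemma list_eq (n : nat) (v : 'I_n -> V) (b : 'I_n -> int) (u : V) (k : 'I_n) (j : nat) (c : int) :
  [seq (if i == k then (Y W u j%:Z (v i), b i - c) else (v i, b i)) | i <- enum 'I_n]
  = repl u [seq (v i, b i) | i <- enum 'I_n] k j c.
Proof.
apply: (@eq_from_nth _ x00).
  by rewrite size_set_nth !size_map -enumT size_enum_ord; apply/esym/maxn_idPr.
rewrite size_map size_enum_ord => i Hi.
rewrite /repl nth_set_nth /= nth_s (nth_map k) ?size_enum_ord //.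
have -> : nth k (enum 'I_n) i = Ordinal Hi by apply: val_inj; rewrite /= nth_enum_ord.
case: (altP (i =P k :> nat)) => Hik.
  have -> : Ordinal Hi = k by apply: val_inj.
  by rewrite eqxx.
have -> : (Ordinal Hi == k) = false by apply/negbTE; apply: contra Hik => /eqP <-.
rewrite -(@nth_s n v b (Ordinal Hi)).
by [].
Qed.

End Basics.

Theorem mainTheorem2 (K : numClosedFieldType) (V : lmodType K) (W : VOA V)
  (B : V -> V -> K) (Wsimple : simpleVOA W) (HB : LZ_form W B)
  (u : V) (N : nat) (HN : (1 <= N)%N) (Hwt : is_wt W u N) (Hqp : quasiprimary W u)
  (f : nat -> int -> K) (n : nat) (v : 'I_n -> V) (J : nat)
  (HJ : forall (k : 'I_n) (j : nat), (J <= j)%N -> Y W u j%:Z (v k) = 0)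
  (a : int) (b : 'I_n -> int) :
  corr W B ((u, a) :: [seq (v i, b i) | i <- enum 'I_n]) =
  \sum_(k < n) \sum_(j < J) \sum_(c < absz a + 2 * N)
     dpsi_coef N f j a c%:Z *
     corr W B [seq (if i == k then (Y W u j%:Z (v i), b i - c%:Z) else (v i, b i))
              | i <- enum 'I_n].
Proof.
set s := [seq (v i, b i) | i <- enum 'I_n].
have Hs : size s = n by rewrite size_map size_enum_ord.
have HJs : forall k i, (J <= i)%N -> Y W u i%:Z (nth (@x00 _ V) s k).1 = 0.
  move=> k i Hi; case: (ltnP k n) => Hk.
    by rewrite /s (@nth_s _ V n v b (Ordinal Hk)) /=; exact: HJ.
  by rewrite nth_default ?Hs // /= Y0r.
have Ecorr : forall l, corr W B l = B (vac W) (@Fs _ _ W l) by [].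
transitivity (B (vac W) (Y W u (- a - 1) (@Fs _ _ W s))); first by [].
rewrite [RHS](eq_bigr (fun k : 'I_n => \sum_(j<J) \sum_(c < absz a + 2*N)
    dpsi_coef N f j a c%:Z * B (vac W) (@Fs _ _ W (@repl _ _ W u s k j c%:Z)))); last first.
  by move=> k _; apply: eq_bigr => j _; apply: eq_bigr => c _; rewrite Ecorr list_eq.
have Split : forall (k : 'I_n) (j : nat),
  \sum_(c < absz a + 2*N) dpsi_coef N f j a c%:Z * B (vac W) (@Fs _ _ W (@repl _ _ W u s k j c%:Z))
  = \sum_(c < absz a + 2*N) binz (c%:Z + j%:Z) j *
       (if (0 <= c%:Z + j%:Z) && (a == - (c%:Z + j%:Z) - 1) then 1 else 0)
       * B (vac W) (@Fs _ _ W (@repl _ _ W u s k j c%:Z))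
  + \sum_(c < absz a + 2*N) binz (c%:Z + j%:Z) j *
       (if (0 <= c%:Z + j%:Z) && (c%:Z + j%:Z <= (2 * N)%:Z - 2) then f (absz (c%:Z + j%:Z)) a else 0)
       * B (vac W) (@Fs _ _ W (@repl _ _ W u s k j c%:Z)).
  move=> k j; rewrite -big_split; apply: eq_bigr => c _.
  by rewrite /dpsi_coef /psi_coef mulrDr mulrDl.
under eq_bigr => k _ do under eq_bigr => j _ do rewrite Split.
under eq_bigr => k _ do rewrite big_split.
rewrite big_split /=.
have R2 : \sum_(k < n) \sum_(j < J) \sum_(c < absz a + 2*N) binz (c%:Z + j%:Z) j *
       (if (0 <= c%:Z + j%:Z) && (c%:Z + j%:Z <= (2 * N)%:Z - 2) then f (absz (c%:Z + j%:Z)) a else 0)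
       * B (vac W) (@Fs _ _ W (@repl _ _ W u s k j c%:Z)) = 0.
  have step1 : forall (k : 'I_n) (j : nat),
    \sum_(c < absz a + 2*N) binz (c%:Z + j%:Z) j *
       (if (0 <= c%:Z + j%:Z) && (c%:Z + j%:Z <= (2 * N)%:Z - 2) then f (absz (c%:Z + j%:Z)) a else 0)
       * B (vac W) (@Fs _ _ W (@repl _ _ W u s k j c%:Z))
    = \sum_(l < (2 * N).-1) f l a * (binz l%:Z j * B (vac W) (@Fs _ _ W (@repl _ _ W u s k j (l%:Z - j%:Z)))).
    move=> k j.
    rewrite (eq_bigr (fun c : 'I_(absz a + 2*N) => if (c + j < (2*N).-1)%N then
       (fun l (c : nat) => f l a * (binz l%:Z j * B (vac W) (@Fs _ _ W (@repl _ _ W u s k j c%:Z)))) (c + j)%N c else 0)); last first.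
      move=> c _.
      have E : ((0 <= c%:Z + j%:Z) && (c%:Z + j%:Z <= (2*N)%:Z - 2)) = (c + j < (2*N).-1)%N.
        by apply/andP/idP => [[? ?]|?]; [lia | split; lia].
      rewrite E -PoszD; case: ifP => _ /=; last by rewrite mulr0 mul0r.
      by rewrite mulrCA mulrA.
    rewrite (@reindex _ _ _ _ _ (fun l (c : nat) => f l a * (binz l%:Z j * B (vac W) (@Fs _ _ W (@repl _ _ W u s k j c%:Z))))); last by lia.
    apply: eq_bigr => l _; case: leqP => Hjl /=.
      by have -> : ((l - j)%N)%:Z = l%:Z - j%:Z by lia.
    by rewrite binz_gt // mul0r mulr0.
  under eq_bigr => k _ do under eq_bigr => j _ do rewrite step1.
  under eq_bigr => k _ do rewrite exchange_big.
  rewrite exchange_big /=.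
  apply: big1 => l _.
  have Hl0 : 0 <= l%:Z by lia.
  have Hc := @comm_list _ _ W u J l%:Z Hl0 s HJs.
  rewrite Hs in Hc.
  transitivity (f l a * B (vac W) (Y W u l%:Z (@Fs _ _ W s))).
    rewrite Hc (@B_sumr _ _ W B HB) mulr_sumr; apply: eq_bigr => k _.
    rewrite (@B_sumr _ _ W B HB) mulr_sumr; apply: eq_bigr => j _.
    by rewrite (@BZr _ _ W B HB).
  rewrite (@Bvac _ _ W B HB u N Hwt Hqp) ?mulr0 //.
  have := ltn_ord l; lia.
rewrite R2 addr0.
clear R2 Split.
case: a => [p|m].
  rewrite (@Bvac _ _ W B HB u N Hwt Hqp); last by lia.
  symmetry; apply: big1 => k _; apply: big1 => j _; apply: big1 => c _.
  have -> : (Posz p == - (c%:Z + j%:Z) - 1) = false by apply/negbTE/eqP; lia.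
  by rewrite mulr0 mul0r.
have Em : - Negz m - 1 = m%:Z by rewrite NegzE; lia.
have Hm0 : 0 <= m%:Z by lia.
rewrite Em (@comm_list _ _ W u J m%:Z Hm0 s HJs) Hs (@B_sumr _ _ W B HB).
apply: eq_bigr => k _; rewrite (@B_sumr _ _ W B HB); apply: eq_bigr => j _.
rewrite (@BZr _ _ W B HB).
case: (leqP j m) => Hjm.
  have Hc : (m - j < absz (Negz m) + 2 * N)%N by rewrite /=; lia.
  rewrite (bigD1 (Ordinal Hc)) //= big1 ?addr0.
    have E1 : ((m - j)%N)%:Z + j%:Z = m%:Z by lia.
    have E2 : ((m - j)%N)%:Z = m%:Z - j%:Z by lia.
    rewrite E1 E2.
    have -> : (Negz m == - m%:Z - 1) = true by rewrite NegzE; apply/eqP; lia.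
    by rewrite mulr1.
  move=> c Hc'.
  have Hne : (c : nat) != (m - j)%N.
    by apply: contra Hc' => /eqP H; apply/eqP/val_inj.
  have -> : (Negz m == - (c%:Z + j%:Z) - 1) = false.
    apply/negbTE/eqP; rewrite NegzE => H; move/eqP: Hne; lia.
  by rewrite ?andbF mulr0 mul0r.
rewrite binz_gt // mul0r; symmetry; apply: big1 => c _.
have -> : (Negz m == - (c%:Z + j%:Z) - 1) = false.
  apply/negbTE/eqP => H; have := NegzE m; lia.
by rewrite ?andbF mulr0 mul0r.
Qed.
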